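(* Let $\mathcal{X}^c=(X^c,\tau^c,\Phi^c,V^c)$ be the canonical model for $EL_{int}$. Then for every $\varphi\in\mathcal{L}_{EL_{int}}$ and every $x\in X^c$: $\varphi\in x$ iff $\mathcal{X}^c,(x,\theta^* )\models\varphi$.
   Context: Fix a countable set $\mathit{Prop}$ and a finite non-empty set $\mathcal{A}$ of agents. $\mathcal{L}_{EL_{int}}$: $\varphi ::= p \mid \neg\varphi \mid \varphi\wedge\varphi \mid K_i\varphi \mid \mathrm{int}(\varphi)$. $EL_{int}$ is the axiom system with axioms: propositional tautologies; $K_i(\varphi\to\psi)\to(K_i\varphi\to K_i\psi)$; $K_i\varphi\to\varphi$; $K_i\varphi\to K_iK_i\varphi$; $\neg K_i\varphi\to K_i\neg K_i\varphi$; $\mathrm{int}(\varphi\to\psi)\to(\mathrm{int}(\varphi)\to\mathrm{int}(\psi))$; $\mathrm{int}(\varphi)\to\varphi$; $\mathrm{int}(\varphi)\to\mathrm{int}(\mathrm{int}(\varphi))$; $K_i\varphi\to\mathrm{int}(\varphi)$; rules: modus ponens, $K_i$-necessitation, $\mathrm{int}$-necessitation. Consistent and maximally consistent sets of $\mathcal{L}_{EL_{int}}$-formulas are defined as usual w.r.t. $EL_{int}$. Canonical model: $X^c$ is the set of all maximally consistent sets; for $i\in\mathcal{A}$, $x\sim_i y$ iff for all $\varphi$, $K_i\varphi\in x\Leftrightarrow K_i\varphi\in y$; $[x]_i$ is the $\sim_i$-class of $x$; $\widehat{\varphi}=\{y\in X^c\mid\varphi\in y\}$; $\tau^c$ is the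 topology on $X^c$ generated by the subbase $\{[x]_i\cap\widehat{\mathrm{int}(\varphi)}\mid x\in X^c,\varphi\in\mathcal{L}_{EL_{int}},i\in\mathcal{A}\}$; $x\in V^c(p)$ iff $p\in x$; $\theta^*:X^c\to(\mathcal{A}\to\tau^c)$ is the total function $\theta^*(x)(i)=[x]_i$, and $\Phi^c=\{\theta^*|_U\mid U\in\tau^c\}$, where $\theta^*|_U$ has domain $U$ and $\theta^*|_U(x)(i)=[x]_i\cap U$. Semantics at $(x,\theta)$ with $x\in Dom(\theta)$: $p$ iff $x\in V^c(p)$; Booleans usual; $K_i\varphi$ iff $\varphi$ holds at $(y,\theta)$ for all $y\in\theta(x)(i)$; $\mathrm{int}(\varphi)$ iff $x\in\mathrm{Int}([\![\varphi]\!]^\theta)$ (interior in $\tau^c$), where $[\![\varphi]\!]^\theta=\{y\in Dom(\theta)\mid(y,\theta)\models\varphi\}$. *)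

(* Defs.v *)
From Stdlib Require Import List Bool.
Import ListNotations.

Inductive form (P A : Type) : Type :=
| Var (p : P)
| Neg (a : form P A)
| And (a b : form P A)
| K (i : A) (a : form P A)
| Int (a : form P A).

Arguments Var {P A} p.
Arguments Neg {P A} a.
Arguments And {P A} a b.
Arguments K {P A} i a.
Arguments Int {P A} a.

Section EL_int.
Variables (P A : Type).
Local Notation form := (form P A).

Definition Imp (a b : form) : form := Neg (And a (Neg b)).

(* Propositional tautologies: true under every Boolean valuation that treats
   atoms p, K_i a and int(a) as propositional atoms. *)
Fixpoint beval (v : form -> bool) (a : form) : bool :=
  match a with
  | Neg b => negb (beval v b)
  | And b c => beval v b && beval v c
  | _ => v a
  end.

Definition tautology (a : form) : Prop := forall v, beval v a = true.

Inductive derivable : form -> Prop :=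
| D_taut a : tautology a -> derivable a
| D_K i a b : derivable (Imp (K i (Imp a b)) (Imp (K i a) (K i b)))
| D_T i a : derivable (Imp (K i a) a)
| D_4 i a : derivable (Imp (K i a) (K i (K i a)))
| D_5 i a : derivable (Imp (Neg (K i a)) (K i (Neg (K i a))))
| D_intK a b : derivable (Imp (Int (Imp a b)) (Imp (Int a) (Int b)))
| D_intT a : derivable (Imp (Int a) a)
| D_int4 a : derivable (Imp (Int a) (Int (Int a)))
| D_Kint i a : derivable (Imp (K i a) (Int a))
| D_MP a b : derivable (Imp a b) -> derivable a -> derivable b
| D_NecK i a : derivable a -> derivable (K i a)
| D_NecInt a : derivable a -> derivable (Int a).

Fixpoint imps (l : list form) (a : form) : form :=
  match l with
  | [] => a
  | b :: l' => Imp b (imps l' a)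
  end.

Definition derives (G : form -> Prop) (a : form) : Prop :=
  exists l, (forall b, In b l -> G b) /\ derivable (imps l a).

Definition consistent (G : form -> Prop) : Prop :=
  ~ exists a, derives G a /\ derives G (Neg a).

Definition max_consistent (G : form -> Prop) : Prop :=
  consistent G /\
  forall a, ~ G a -> ~ consistent (fun b => G b \/ b = a).

Record mcs : Type := Mcs { mcs_set : form -> Prop; mcs_max : max_consistent mcs_set }.

Definition hat (a : form) (y : mcs) : Prop := mcs_set y a.

Definition sim (i : A) (x y : mcs) : Prop :=
  forall a, mcs_set x (K i a) <-> mcs_set y (K i a).

Definition subbase_c (B : mcs -> Prop) : Prop :=
  exists (x : mcs) (i : A) (a : form), forall y, B y <-> (sim i x y /\ hat (Int a) y).

Definition open_c (U : mcs -> Prop) : Prop :=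
  forall x, U x ->
    exists l : list (mcs -> Prop),
      (forall B, In B l -> subbase_c B /\ B x) /\
      (forall y, (forall B, In B l -> B y) -> U y).

Definition interior_c (S : mcs -> Prop) (x : mcs) : Prop :=
  exists U, open_c U /\ U x /\ (forall y, U y -> S y).

Definition V_c (p : P) (x : mcs) : Prop := hat (Var p) x.

(* a (partial) neighbourhood function theta: its domain and its values
   theta(x)(i) as sets *)
Record nbhd_fun : Type := NF { dom : mcs -> Prop; fn : mcs -> A -> mcs -> Prop }.

Definition theta_star : nbhd_fun := NF (fun _ => True) (fun x i y => sim i x y).

Definition theta_restrict (U : mcs -> Prop) : nbhd_fun :=
  NF U (fun x i y => sim i x y /\ U y).

Definition Phi_c (th : nbhd_fun) : Prop :=
  exists U, open_c U /\ th = theta_restrict U.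

Fixpoint sat (th : nbhd_fun) (x : mcs) (a : form) : Prop :=
  match a with
  | Var p => V_c p x
  | Neg b => ~ sat th x b
  | And b c => sat th x b /\ sat th x c
  | K i b => forall y, fn th x i y -> sat th y b
  | Int b => interior_c (fun y => dom th y /\ sat th y b) x
  end.

End EL_int.

Arguments mcs_set {P A} m _.
Arguments theta_star {P A}.

(* Main.v *)
Require Import Defs.
From Stdlib Require Import List.
From Stdlib Require Import Bool Classical ClassicalEpsilon Cantor PeanoNat Lia.
Import ListNotations.

Section Proof.
Variables P A : Type.
Local Notation form := (form P A).
Local Notation der := (derivable P A).
Local Notation Imp := (Imp P A).
Local Notation imps := (imps P A).
Local Notation beval := (beval P A).
Local Notation derives := (derives P A).
Local Notation consistent := (consistent P A).
Local Notation mcs := (mcs P A).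

Lemma beval_imp v a b : beval v (Imp a b) = true <-> (beval v a = true -> beval v b = true).
Proof. unfold Defs.Imp; simpl. destruct (beval v a), (beval v b); simpl; intuition congruence. Qed.

Lemma beval_neg v a : beval v (Neg a) = true <-> beval v a <> true.
Proof. simpl. destruct (beval v a); simpl; intuition congruence. Qed.

Lemma beval_and v a b : beval v (And a b) = true <-> beval v a = true /\ beval v b = true.
Proof. simpl. apply andb_true_iff. Qed.

Lemma beval_imps v l a : beval v (imps l a) = true <->
  ((forall b, In b l -> beval v b = true) -> beval v a = true).
Proof.
  induction l as [|c l IH]; cbn [Defs.imps In].
  - split; auto; intros H; apply H; tauto.
  - rewrite beval_imp, IH. split.
    + intros H H1. apply H; auto.
    + intros H H1 H2. apply H. intros b [->|Hb]; auto.
Qed.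

Lemma imps_mp L c : der (imps L c) -> (forall b, In b L -> der b) -> der c.
Proof.
  induction L as [|b L IH]; simpl; auto.
  intros H HL. apply IH; auto. eapply D_MP; eauto.
Qed.

Lemma taut_multi L c : (forall v, (forall b, In b L -> beval v b = true) -> beval v c = true) ->
  (forall b, In b L -> der b) -> der c.
Proof.
  intros H HL. apply (imps_mp L); auto. apply D_taut. intro v. apply beval_imps. auto.
Qed.

Lemma derives_taut (G : form -> Prop) L c :
  (forall b, In b L -> derives G b) ->
  (forall v, (forall b, In b L -> beval v b = true) -> beval v c = true) ->
  derives G c.
Proof.
  intros HL Hv.
  assert (exists l, (forall b, In b l -> G b) /\ forall b, In b L -> der (imps l b)) as [l [Hl Hd]].
  { clear Hv. induction L as [|b L IH].
    - exists []. simpl; tauto.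
    - destruct IH as [l [Hl Hd]]. { intros; apply HL; simpl; auto. }
      destruct (HL b (or_introl eq_refl)) as [l1 [Hl1 Hd1]].
      exists (l1 ++ l). split.
      + intros d Hd'. apply in_app_or in Hd'. destruct Hd'; auto.
      + intros d [->|Hd'].
        * apply (taut_multi [imps l1 d]). 2: intros e [<-|[]]; auto.
          intros v Hv. specialize (Hv _ (or_introl eq_refl)).
          rewrite beval_imps in *. intros H. apply Hv. intros e He. apply H, in_or_app; auto.
        * apply (taut_multi [imps l d]). 2: intros e [<-|[]]; auto.
          intros v Hv. specialize (Hv _ (or_introl eq_refl)).
          rewrite beval_imps in *. intros H. apply Hv. intros e He. apply H, in_or_app; auto. }
  exists l. split; auto.
  apply (taut_multi (map (imps l) L)).
  - intros v Hw. apply beval_imps. intros Hl'. apply Hv.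
    intros b Hb. assert (In (imps l b) (map (imps l) L)) by (apply in_map; auto).
    specialize (Hw _ H). rewrite beval_imps in Hw. auto.
  - intros b Hb. apply in_map_iff in Hb. destruct Hb as [d [<- Hd']]. auto.
Qed.


Lemma derives_mem (G : form -> Prop) a : G a -> derives G a.
Proof.
  intros H. exists [a]. split. intros b [<-|[]]; auto.
  apply D_taut. intro v. apply beval_imps. intros Hb; apply Hb; simpl; auto.
Qed.

Lemma derives_der (G : form -> Prop) a : der a -> derives G a.
Proof. intros H. exists []. simpl. split; tauto. Qed.

Lemma derives_mono (G H : form -> Prop) a : (forall b, G b -> H b) -> derives G a -> derives H a.
Proof. intros HGH [l [Hl Hd]]. exists l. split; auto. Qed.

Lemma split_list (G : form -> Prop) a l : (forall b, In b l -> G b \/ b = a) ->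
  exists l', (forall b, In b l' -> G b) /\ forall b, In b l -> b = a \/ In b l'.
Proof.
  induction l as [|c l IH]; intros H.
  - exists []. simpl; tauto.
  - destruct IH as [l' [H1 H2]]. { intros; apply H; simpl; auto. }
    destruct (H c (or_introl eq_refl)) as [Hc|Hc].
    + exists (c :: l'). split.
      * intros b [<-|Hb]; auto.
      * intros b [<-|Hb]. right; left; auto. destruct (H2 b Hb); auto. right; right; auto.
    + exists l'. split; auto. intros b [<-|Hb]; auto.
Qed.

Lemma deduction (G : form -> Prop) a c : derives (fun b => G b \/ b = a) c -> derives G (Imp a c).
Proof.
  intros [l [Hl Hd]]. destruct (split_list G a l Hl) as [l' [H1 H2]].
  exists l'. split; auto.
  apply (taut_multi [imps l c]). 2: intros e [<-|[]]; auto.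
  intros v Hv. specialize (Hv _ (or_introl eq_refl)). rewrite beval_imps in *.
  intros Hl'. rewrite beval_imp. intros Ha. apply Hv. intros b Hb.
  destruct (H2 b Hb) as [->|Hb']; auto.
Qed.

Lemma incons_all (G : form -> Prop) c : ~ consistent G -> derives G c.
Proof.
  intros H. apply NNPP in H. destruct H as [a [H1 H2]].
  apply (derives_taut G [a; Neg a]).
  - intros b [<-|[<-|[]]]; auto.
  - intros v Hv. exfalso. pose proof (Hv a (or_introl eq_refl)).
    pose proof (Hv (Neg a) (or_intror (or_introl eq_refl))). rewrite beval_neg in H0. auto.
Qed.

Section MCS.
Variable x : mcs.
Local Notation mx := (mcs_set x).

Lemma mcs_cons : consistent mx.
Proof. destruct (mcs_max _ _ x) as [H _]; exact H. Qed.

Lemma not_mem_derives_neg a : ~ mx a -> derives mx (Neg a).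
Proof.
  intros H. destruct (mcs_max _ _ x) as [Hc Hm].
  pose proof (Hm a H) as H2.
  destruct (NNPP _ H2) as [c [H3 H4]].
  apply deduction in H3. apply deduction in H4.
  apply (derives_taut mx [Imp a c; Imp a (Neg c)]).
  - intros b [<-|[<-|[]]]; auto.
  - intros v Hv. pose proof (Hv _ (or_introl eq_refl)).
    pose proof (Hv _ (or_intror (or_introl eq_refl))). rewrite beval_imp in *.
    rewrite beval_neg. intros Ha. specialize (H0 Ha). specialize (H1 Ha). rewrite beval_neg in H1. auto.
Qed.

Lemma mcs_closed a : derives mx a -> mx a.
Proof.
  intros H. apply NNPP. intros Hn. apply not_mem_derives_neg in Hn.
  apply mcs_cons. exists a. auto.
Qed.

Lemma mcs_neg a : mx (Neg a) <-> ~ mx a.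
Proof.
  split.
  - intros H1 H2. apply mcs_cons. exists a. split; apply derives_mem; auto.
  - intros H. apply mcs_closed, not_mem_derives_neg, H.
Qed.

Lemma mcs_and a b : mx (And a b) <-> mx a /\ mx b.
Proof.
  split.
  - intros H. split; apply mcs_closed; apply (derives_taut _ [And a b]);
      try (intros e [<-|[]]; apply derives_mem; auto);
      intros v Hv; specialize (Hv _ (or_introl eq_refl)); rewrite beval_and in Hv; tauto.
  - intros [H1 H2]. apply mcs_closed; apply (derives_taut _ [a; b]).
    + intros e [<-|[<-|[]]]; apply derives_mem; auto.
    + intros v Hv. apply beval_and. split; apply Hv; simpl; auto.
Qed.

Lemma mcs_mp a b : der (Imp a b) -> mx a -> mx b.
Proof.
  intros H1 H2. apply mcs_closed. apply (derives_taut _ [Imp a b; a]).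
  - intros e [<-|[<-|[]]]. apply derives_der; auto. apply derives_mem; auto.
  - intros v Hv. pose proof (Hv _ (or_introl eq_refl)). rewrite beval_imp in H.
    apply H, Hv; simpl; auto.
Qed.

End MCS.


Lemma cons_mono (G H : form -> Prop) : (forall b, G b -> H b) -> consistent H -> consistent G.
Proof.
  intros HGH Hc [a [H1 H2]]. apply Hc. exists a. split; eapply derives_mono; eauto.
Qed.

Section Lind.
Variable code : form -> nat.
Hypothesis code_inj : forall a b, code a = code b -> a = b.
Variable G : form -> Prop.
Hypothesis HG : consistent G.

Fixpoint Gam (n : nat) : form -> Prop :=
  match n with
  | 0 => G
  | S n => fun c => Gam n c \/ (code c = n /\ consistent (fun d => Gam n d \/ d = c))
  end.

Lemma Gam_mono n m c : n <= m -> Gam n c -> Gam m c.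
Proof.
  induction 1; auto. intros H0. simpl. left; auto.
Qed.

Lemma Gam_cons n : consistent (Gam n).
Proof.
  induction n as [|n IH]; simpl; auto.
  destruct (classic (exists c0, code c0 = n /\ consistent (fun d => Gam n d \/ d = c0))) as [[c0 [H1 H2]]|Hn].
  - refine (cons_mono _ _ _ H2). intros b [Hb|[Hb1 Hb2]]; auto.
    right. apply code_inj. congruence.
  - refine (cons_mono _ _ _ IH). intros b [Hb|[Hb1 Hb2]]; auto.
    exfalso; apply Hn; eauto.
Qed.

Definition Ylim (c : form) : Prop := exists n, Gam n c.

Lemma cover l : (forall b, In b l -> Ylim b) -> exists N, forall b, In b l -> Gam N b.
Proof.
  induction l as [|c l IH]; intros H.
  - exists 0. intros b [].
  - destruct IH as [N HN]. { intros; apply H; simpl; auto. }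
    destruct (H c (or_introl eq_refl)) as [n Hn].
    exists (max n N). intros b [<-|Hb].
    + apply (Gam_mono n); auto. lia.
    + apply (Gam_mono N); auto. lia.
Qed.

Lemma Ylim_cons : consistent Ylim.
Proof.
  intros [a [[l1 [H1 D1]] [l2 [H2 D2]]]].
  destruct (cover (l1 ++ l2)) as [N HN].
  { intros b Hb. apply in_app_or in Hb. destruct Hb; auto. }
  apply (Gam_cons N). exists a. split.
  - exists l1. split; auto. intros b Hb. apply HN, in_or_app; auto.
  - exists l2. split; auto. intros b Hb. apply HN, in_or_app; auto.
Qed.

Lemma Ylim_max : max_consistent P A Ylim.
Proof.
  split. apply Ylim_cons.
  intros a Ha Hc. apply Ha. exists (S (code a)). simpl. right. split; auto.
  refine (cons_mono _ _ _ Hc). intros b [Hb|Hb]; auto. left; exists (code a); auto.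
Qed.

Lemma Ylim_ext c : G c -> Ylim c.
Proof. intros H; exists 0; auto. Qed.

End Lind.

Lemma lindenbaum (code : form -> nat) (code_inj : forall a b, code a = code b -> a = b)
  (G : form -> Prop) : consistent G -> exists y : mcs, forall c, G c -> mcs_set y c.
Proof.
  intros HG. exists (Mcs _ _ (Ylim code G) (Ylim_max code code_inj G HG)). simpl.
  apply Ylim_ext.
Qed.


Section Modal.
Variable M : form -> form.
Hypothesis HK : forall a b, der (Imp (M (Imp a b)) (Imp (M a) (M b))).
Hypothesis HN : forall a, der a -> der (M a).

Lemma box_imps L b : der (imps L b) -> der (imps (map M L) (M b)).
Proof.
  revert b. induction L as [|c L IH]; intros b H.
  - simpl. auto.
  - assert (H1 : der (imps L (Imp c b))).
    { apply (taut_multi [imps (c :: L) b]). 2: intros e [<-|[]]; auto.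
      intros v Hv. specialize (Hv _ (or_introl eq_refl)). rewrite beval_imps in *.
      intros HL. rewrite beval_imp. intros Hc. apply Hv. intros e [<-|He]; auto. }
    apply IH in H1.
    apply (taut_multi [imps (map M L) (M (Imp c b)); Imp (M (Imp c b)) (Imp (M c) (M b))]).
    2: intros e [<-|[<-|[]]]; auto.
    intros v Hv. pose proof (Hv _ (or_introl eq_refl)) as E1.
    pose proof (Hv _ (or_intror (or_introl eq_refl))) as E2.
    rewrite beval_imps in *. rewrite !beval_imp in E2.
    intros HL. apply E2. apply E1. intros e He. apply HL. simpl; auto.
    apply HL; simpl; auto.
Qed.

Lemma box_mcs (x : mcs) L b : (forall c, In c L -> mcs_set x (M c)) -> der (imps L b) ->
  mcs_set x (M b).
Proof.
  intros HL Hd. apply mcs_closed. exists (map M L). split.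
  - intros e He. apply in_map_iff in He. destruct He as [c [<- Hc]]. auto.
  - apply box_imps; auto.
Qed.

Lemma box_exist (code : form -> nat) (code_inj : forall a b, code a = code b -> a = b)
  (x : mcs) b : ~ mcs_set x (M b) ->
  exists y : mcs, (forall c, mcs_set x (M c) -> mcs_set y c) /\ mcs_set y (Neg b).
Proof.
  intros Hb.
  assert (Hc : consistent (fun c => mcs_set x (M c) \/ c = Neg b)).
  { intros Hn. assert (Hd0 : derives (fun c => mcs_set x (M c) \/ c = Neg b) b)
      by (apply incons_all; intros Hc; apply Hc; exact Hn).
    destruct Hd0 as [l [Hl Hd]].
      destruct (split_list (fun c => mcs_set x (M c)) (Neg b) l Hl) as [l' [H1 H2]].
      apply Hb. apply (box_mcs x l'); auto.
      apply (taut_multi [imps l b]). 2: intros e [<-|[]]; auto.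
      intros v Hv. specialize (Hv _ (or_introl eq_refl)). rewrite beval_imps in *.
      intros Hl'. destruct (beval v b) eqn:E; auto. apply Hv.
      intros e He. destruct (H2 e He) as [->|He']; auto. rewrite beval_neg, E. discriminate. }
  destruct (lindenbaum code code_inj _ Hc) as [y Hy].
  exists y. split; intros; apply Hy; auto.
Qed.

End Modal.


Lemma sim_from i (x y : mcs) :
  (forall d, mcs_set x (K i d) -> mcs_set y (K i d)) ->
  (forall d, mcs_set x (Neg (K i d)) -> mcs_set y (Neg (K i d))) -> sim P A i x y.
Proof.
  intros H1 H2 d. split; auto. intros Hy. apply NNPP. intros Hx.
  apply mcs_neg in Hx. apply H2 in Hx. apply mcs_neg in Hx. auto.
Qed.

Section Truth.
Variable code : form -> nat.
Hypothesis code_inj : forall a b, code a = code b -> a = b.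
Variable i0 : A.

Lemma truth (phi : form) : forall x : mcs, mcs_set x phi <-> sat P A theta_star x phi.
Proof.
  induction phi as [p|b IH|b IHb c IHc|i b IH|b IH]; intros x; simpl.
  - unfold V_c, hat. tauto.
  - rewrite mcs_neg, IH. tauto.
  - rewrite mcs_and, IHb, IHc. tauto.
  - split.
    + intros H y Hs. apply IH. apply Hs in H.
      apply (mcs_mp y (K i b)); auto. apply D_T.
    + intros H. apply NNPP. intros Hn.
      destruct (box_exist (K i) (D_K P A i) (D_NecK P A i) code code_inj x b Hn) as [y [Hy1 Hy2]].
      assert (Hs : sim P A i x y).
      { apply sim_from.
        - intros d Hd. apply Hy1. apply (mcs_mp x (K i d)); auto. apply D_4.
        - intros d Hd. apply Hy1. apply (mcs_mp x (Neg (K i d))); auto. apply D_5. }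
      apply H, IH in Hs. apply mcs_neg in Hy2. auto.
  - split.
    + intros H. exists (fun y => sim P A i0 x y /\ hat P A (Int b) y). split; [|split].
      * intros y Hy. exists [fun y => sim P A i0 x y /\ hat P A (Int b) y]. split.
        -- intros B [<-|[]]. split; auto. exists x, i0, b. intros z; tauto.
        -- intros z Hz. apply Hz. simpl; auto.
      * split. intros d; tauto. exact H.
      * intros y [_ Hy]. split; auto. apply IH. apply (mcs_mp y (Int b)); auto. apply D_intT.
    + intros [U [HU [HUx HUs]]]. apply NNPP. intros Hn.
      destruct (box_exist Int (D_intK P A) (D_NecInt P A) code code_inj x b Hn) as [y [Hy1 Hy2]].
      assert (Hs : forall i, sim P A i x y).
      { intros i. apply sim_from.
        - intros d Hd. apply Hy1.
          apply (mcs_mp x (K i (K i d))); [apply D_Kint|]. apply (mcs_mp x (K i d)); auto. apply D_4.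
        - intros d Hd. apply Hy1. apply (mcs_mp x (K i (Neg (K i d)))); [apply D_Kint|].
          apply (mcs_mp x (Neg (K i d))); auto. apply D_5. }
      destruct (HU x HUx) as [l [Hl1 Hl2]].
      assert (Uy : U y).
      { apply Hl2. intros B HB. destruct (Hl1 B HB) as [[x' [i' [a' Hb']]] HBx].
        apply Hb' in HBx. destruct HBx as [Hsx Hix]. apply Hb'. split.
        - intros d. rewrite (Hsx d). apply Hs.
        - unfold hat in *. apply Hy1. apply (mcs_mp x (Int a')); auto. apply D_int4. }
      apply HUs in Uy. destruct Uy as [_ Uy]. apply IH in Uy. apply mcs_neg in Hy2. auto.
Qed.

End Truth.

End Proof.

Lemma to_nat_inj p q : to_nat p = to_nat q -> p = q.
Proof. intros H. rewrite <- (cancel_of_to p), <- (cancel_of_to q), H. reflexivity. Qed.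

Fixpoint enc {P A} (cP : P -> nat) (cA : A -> nat) (a : form P A) : nat :=
  match a with
  | Var p => to_nat (0, cP p)
  | Neg b => to_nat (1, enc cP cA b)
  | And b c => to_nat (2, to_nat (enc cP cA b, enc cP cA c))
  | K i b => to_nat (3, to_nat (cA i, enc cP cA b))
  | Int b => to_nat (4, enc cP cA b)
  end.

Lemma enc_inj {P A} (cP : P -> nat) (cA : A -> nat)
  (HP : forall p q, cP p = cP q -> p = q) (HA : forall i j, cA i = cA j -> i = j) :
  forall a b, enc cP cA a = enc cP cA b -> a = b.
Proof.
  induction a as [p|a IH|a IHa a' IHa'|i a IH|a IH]; destruct b as [q|b|b b'|j b|b]; cbn [enc];
    intros E; apply to_nat_inj in E; try discriminate;
    pose proof (f_equal snd E) as E2; cbn [snd] in E2.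
  - f_equal; auto.
  - f_equal; auto.
  - apply to_nat_inj in E2. pose proof (f_equal fst E2) as E3. pose proof (f_equal snd E2) as E4.
    cbn [fst snd] in E3, E4. f_equal; auto.
  - apply to_nat_inj in E2. pose proof (f_equal fst E2) as E3. pose proof (f_equal snd E2) as E4.
    cbn [fst snd] in E3, E4. f_equal; auto.
  - f_equal; auto.
Qed.

Theorem mainTheorem15 (P A : Type)
  (P_countable : exists f : P -> nat, forall p q, f p = f q -> p = q)
  (A_finite : exists l : list A, forall i, In i l)
  (A_nonempty : inhabited A)
  (phi : form P A) (x : mcs P A) :
  mcs_set x phi <-> sat P A theta_star x phi.
Proof.
  destruct P_countable as [cP HP]. destruct A_finite as [l Hl]. destruct A_nonempty as [i0].
  assert (HA : exists cA : A -> nat, forall i j, cA i = cA j -> i = j).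
  { exists (fun i => proj1_sig (constructive_indefinite_description _ (In_nth_error l i (Hl i)))).
    intros i j E.
    destruct (constructive_indefinite_description _ (In_nth_error l i (Hl i))) as [n Hn].
    destruct (constructive_indefinite_description _ (In_nth_error l j (Hl j))) as [m Hm].
    simpl in E. subst. congruence. }
  destruct HA as [cA HA].
  apply (truth P A (enc cP cA) (enc_inj cP cA HP HA) i0).
Qed.
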